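(* Let $n\ge1$, let $\check{\mathbf{F}}\in\mathbb{C}^{n\times n}$ have entries $(\check{\mathbf{F}})_{j,k}=\frac{1}{\sqrt n}\left(\cos\frac{2jk\pi}{n}+i\sin\frac{2jk\pi}{n}\right)$ for $j,k=0,\dots,n-1$, and let $\mathbf{C}:=\operatorname{Diag}(\{\cos\frac{k\pi}{n}\}_{k=0}^{n-1})$, $\mathbf{S}:=\operatorname{Diag}(\{\sin\frac{k\pi}{n}\}_{k=0}^{n-1})$. Then $\mathbf{C}\check{\mathbf{F}}^2\mathbf{S}+\mathbf{S}\check{\mathbf{F}}^2\mathbf{C}=\mathbf{0}$.
   Context: $i$ is the imaginary unit; $\operatorname{Diag}(\{d_k\})$ is the diagonal matrix with diagonal entries $d_0,\dots,d_{n-1}$. *)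

(* Defs.v *)
From HB Require Import structures.
From mathcomp Require Import all_boot all_order all_algebra.
From mathcomp Require Import reals trigo.
From mathcomp Require Import complex.
Set Implicit Arguments. Unset Strict Implicit. Unset Printing Implicit Defensive.
Import Order.TTheory GRing.Theory Num.Theory.
Local Open Scope ring_scope.
Local Open Scope complex_scope.

Definition Fcheck (R : realType) (n : nat) : 'M[R[i]]_n :=
  \matrix_(j < n, k < n)
    ((Num.sqrt (n%:R : R))^-1 *
       cos ((2 * (j : nat)%:R * (k : nat)%:R * pi) / n%:R)
     +i* ((Num.sqrt (n%:R : R))^-1 *
       sin ((2 * (j : nat)%:R * (k : nat)%:R * pi) / n%:R))).

Definition Cdiag (R : realType) (n : nat) : 'M[R[i]]_n :=
  diag_mx (\row_(k < n) ((cos (((k : nat)%:R * pi) / n%:R) : R)%:C)).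
Definition Sdiag (R : realType) (n : nat) : 'M[R[i]]_n :=
  diag_mx (\row_(k < n) ((sin (((k : nat)%:R * pi) / n%:R) : R)%:C)).

(* Main.v *)
Require Import Defs.
From HB Require Import structures.
From mathcomp Require Import all_boot all_order all_algebra.
From mathcomp Require Import reals trigo.
From mathcomp Require Import complex.
From mathcomp Require Import ring lra.
Set Implicit Arguments. Unset Strict Implicit. Unset Printing Implicit Defensive.
Import Order.TTheory GRing.Theory Num.Theory.
Local Open Scope ring_scope.
Local Open Scope complex_scope.

Section S.
Variable R : realType.
Definition E (x : R) : R[i] := cos x +i* sin x.

Lemma E_add a b : E (a + b) = E a * E b.
Proof. rewrite /E cosD sinD /=. congr (_ +i* _); ring. Qed.

Lemma E0 : E 0 = 1.
Proof. by rewrite /E cos0 sin0. Qed.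

Lemma E_natmul x k : E (x *+ k) = E x ^+ k.
Proof. elim: k => [|k IH]; first by rewrite mulr0n expr0 E0.
by rewrite mulrS E_add IH exprS. Qed.

Lemma E2pi : E (pi *+ 2) = 1.
Proof. by rewrite /E cos2pi sin2pi. Qed.

Variable n : nat.
Hypothesis hn : (0 < n)%N.
Definition w (m : nat) := E (2 * pi * m%:R / n%:R).

Lemma nR_neq0 : (n%:R : R) != 0.
Proof. by rewrite pnatr_eq0 -lt0n. Qed.

Lemma w_mod m : w m = w (m %% n).
Proof.
rewrite {1}(divn_eq m n) /w natrD natrM.
have -> : 2 * (pi : R) * ((m %/ n)%:R * n%:R + (m %% n)%:R) / n%:R
   = 2 * pi * (m %% n)%:R / n%:R + (pi *+ 2) *+ (m %/ n).
  rewrite -[pi *+ 2]mulr_natr -[X in _ + X]mulr_natr; field; exact: nR_neq0.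
by rewrite E_add E_natmul E2pi expr1n mulr1.
Qed.

Lemma w_ne1 r : (0 < r < n)%N -> w r != 1.
Proof.
case/andP=> r0 rn.
have hn' : (0 : R) < n%:R by rewrite ltr0n.
apply/eqP => -[h1 _]; move: h1.
have -> : 2 * (pi : R) * r%:R / n%:R = (pi * r%:R / n%:R) *+ 2 by rewrite -[RHS]mulr_natr; field; exact: nR_neq0.
rewrite cos_mulr2n cos2sin2.
have : 0 < sin ((pi : R) * r%:R / n%:R).
  apply: sin_gt0_pi; apply/andP; split.
    by apply: divr_gt0 => //; apply: mulr_gt0; [exact: pi_gt0| rewrite ltr0n].
  rewrite ltr_pdivrMr // ltr_pM2l ?pi_gt0 // ltr_nat //.
move=> h h2.
have : sin ((pi:R) * r%:R / n%:R) ^+ 2 = 0 by lra.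
by move/eqP; rewrite sqrf_eq0 => /eqP h3; rewrite h3 ltxx in h.
Qed.

Lemma w_pow_n m : w m ^+ n = 1.
Proof.
rewrite /w -E_natmul.
have -> : (2 * (pi : R) * m%:R / n%:R) *+ n = (pi *+ 2) *+ m.
  rewrite -[pi *+ 2]mulr_natr -[LHS]mulr_natr -[RHS]mulr_natr; field; exact: nR_neq0.
by rewrite E_natmul E2pi expr1n.
Qed.

Lemma sum_w m : \sum_(k < n) w m ^+ k = if (n %| m)%N then n%:R else 0.
Proof.
rewrite w_mod /dvdn; case: eqP => [->|hr].
  rewrite /w (_ : 2 * (pi:R) * 0%:R / n%:R = 0) ?E0; last by rewrite mulr0 mul0r.
  by rewrite (eq_bigr (fun _ => 1)) => [|k _]; rewrite ?expr1n // sumr_const card_ord.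
have hne : w (m %% n) - 1 != 0 by rewrite subr_eq0 w_ne1 // lt0n ltn_pmod ?andbT //; apply/eqP.
have : (w (m %% n) - 1) * \sum_(k < n) w (m %% n) ^+ k = 0 by rewrite -subrX1 w_pow_n subrr.
by move/eqP; rewrite mulf_eq0 (negbTE hne) /= => /eqP.
Qed.
Definition sc : R := (Num.sqrt (n%:R : R))^-1.

Lemma FE (j k : 'I_n) : Fcheck R n j k = sc%:C * E (2 * (j : nat)%:R * (k : nat)%:R * pi / n%:R).
Proof. rewrite /Fcheck mxE /E /sc /=; congr (_ +i* _); ring. Qed.

Lemma sc2 : sc ^+ 2 * n%:R = 1.
Proof. by rewrite /sc exprVn sqr_sqrtr ?ler0n // mulVf // nR_neq0. Qed.

Lemma F2E (j l : 'I_n) : (Fcheck R n *m Fcheck R n) j l = if (n %| (j + l))%N then 1 else 0.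
Proof.
rewrite mxE.
have h : forall a b : R, sc%:C * E a * (sc%:C * E b) = (sc*sc)%:C * E (a+b).
  by move=> a b; rewrite E_add rmorphM /=; ring.
under eq_bigr => k _ do rewrite !FE h.
have hk : forall k : 'I_n, 2 * (j : nat)%:R * (k : nat)%:R * pi / n%:R + 2 * (k : nat)%:R * (l : nat)%:R * pi / n%:R
   = (2 * (pi : R) * (j + l)%:R / n%:R) *+ k.
  by move=> k; rewrite -[RHS]mulr_natr natrD; field; exact: nR_neq0.
under eq_bigr => k _ do rewrite hk E_natmul.
rewrite -mulr_sumr sum_w; case: ifP => _; last by rewrite mulr0.
by rewrite -(rmorph_nat (real_complex R)) -rmorphM /= -expr2 sc2.
Qed.
End S.

Lemma sin_pin (R : realType) q : sin ((pi : R) *+ q) = 0.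
Proof. elim: q => [|q IH]; first by rewrite mulr0n sin0.
by rewrite mulrSr sinDpi IH oppr0. Qed.

Theorem mainTheorem7 (R : realType) (n : nat) (hn : (1 <= n)%N) :
  Cdiag R n *m (Fcheck R n *m Fcheck R n) *m Sdiag R n
  + Sdiag R n *m (Fcheck R n *m Fcheck R n) *m Cdiag R n = 0.
Proof.
rewrite /Cdiag /Sdiag.
set M := Fcheck R n *m Fcheck R n.
rewrite !mul_diag_mx !mul_mx_diag; apply/matrixP => j l; have h2 := @F2E R n hn j l; rewrite mxE in h2; rewrite !mxE h2.
case: ifP => h; last by rewrite !mulr0 !mul0r addr0.
rewrite !mulr1 -!rmorphM -rmorphD /=.
have -> : cos ((j : nat)%:R * pi / n%:R) * sin ((l : nat)%:R * pi / n%:R) +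
  sin ((j : nat)%:R * pi / n%:R) * cos ((l : nat)%:R * pi / n%:R)
  = sin ((j : nat)%:R * pi / n%:R + (l : nat)%:R * pi / n%:R) :> R by rewrite sinD; ring.
case/dvdnP: h => q hq.
have -> : (j : nat)%:R * pi / n%:R + (l : nat)%:R * pi / n%:R = (pi : R) *+ q.
  have -> : (j : nat)%:R = q%:R * n%:R - (l : nat)%:R :> R by rewrite -natrM -hq natrD addrK.
  rewrite -[RHS]mulr_natr; field; exact: nR_neq0.
by rewrite sin_pin.
Qed.
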